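(* For all integers $0\le k\le n$ and all $x$, \[ \sum_{j=0}^{n-k}\binom{n-k}{j}B_{j+k}(x)=\sum_{j=0}^{k}\binom{k}{j}(-1)^{j}B_{n-j}(x)+\big(nx-(n-k)\big)x^{n-k-1}(x-1)^{k-1}, \] where the last term is understood as the polynomial $\frac{d}{dx}\left[x^{n-k}(x-1)^k\right]$ (to which it is equal after cancellation, also in the cases $k=0$ or $k=n$).
   Context: The Bernoulli polynomials are defined by $\sum_{n\ge0}B_n(x)\frac{t^n}{n!}=\frac{te^{xt}}{e^t-1}$. *)

(* Defs.v *)
From HB Require Import structures.
From mathcomp Require Import all_boot all_order all_algebra.
Set Implicit Arguments. Unset Strict Implicit. Unset Printing Implicit Defensive.
Import Order.TTheory GRing.Theory Num.Theory.
Local Open Scope ring_scope.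

(* Bernoulli polynomials B_n(x), defined by  sum_n B_n(x) t^n/n! = t e^{xt}/(e^t-1).
   Comparing coefficients of t^{n+1} in  (e^t - 1) * sum_n B_n(x) t^n/n! = t e^{xt}
   gives exactly the recurrence
       sum_{k=0}^{n} C(n+1,k) B_k(x) = (n+1) x^n      (for every n),
   which determines the B_n uniquely (in characteristic 0):
       B_n = X^n - (n+1)^{-1} * sum_{k<n} C(n+1,k) B_k.
   [bern_seq n] is the list [:: B_0; ...; B_n]. *)
Fixpoint bern_seq (R : numFieldType) (n : nat) : seq {poly R} :=
  match n with
  | 0 => [:: 1]
  | n'.+1 =>
      let s := bern_seq R n' in
      rcons s ('X^n - (n.+1%:R)^-1 *:
                 \sum_(k < n) ('C(n.+1, k))%:R *: nth 0 s k)
  end.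

Definition bernoulli_poly (R : numFieldType) (n : nat) : {poly R} :=
  nth 0 (bern_seq R n) n.

(* Main.v *)
Require Import Defs.
From HB Require Import structures.
From mathcomp Require Import all_boot all_order all_algebra ring zify.
Import Order.TTheory GRing.Theory Num.Theory.
Local Open Scope ring_scope.

Section B.
Variable R : numFieldType.
Local Notation B := (bernoulli_poly R).

Lemma size_bern n : size (bern_seq R n) = n.+1.
Proof. by elim: n => [|n IH] //=; rewrite size_rcons IH. Qed.

Lemma nth_bern m i : (i <= m)%N -> nth 0 (bern_seq R m) i = B i.
Proof.
elim: m i => [|m IH] i.
  by rewrite leqn0 => /eqP ->.
rewrite leq_eqVlt => /orP [/eqP -> // | him].
by rewrite /= nth_rcons size_bern him IH.
Qed.

Lemma bernS n : B n.+1 = 'X^(n.+1) - (n.+2%:R)^-1 *: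
   \sum_(k < n.+1) ('C(n.+2, k))%:R *: B k.
Proof.
rewrite {1}/bernoulli_poly /= nth_rcons size_bern ltnn eqxx.
congr (_ - _ *: _); apply: eq_bigr => [[k hk]] _ /=.
by rewrite nth_bern.
Qed.

Lemma bern_rec n : \sum_(k < n.+1) ('C(n.+1, k))%:R *: B k = n.+1%:R *: 'X^n.
Proof.
case: n => [|n].
  by rewrite big_ord1 /= /bernoulli_poly /= !scale1r.
rewrite big_ord_recr /= bernS binSn.
set S := \sum_(_ < _) _.
rewrite scalerBr scalerA mulfV ?scale1r 1?addrC ?subrK //.
by rewrite pnatr_eq0.
Qed.

Lemma bern_shift m : \sum_(i < m) ('C(m, i))%:R *: B i = ('X^m)^`().
Proof.
case: m => [|m]; first by rewrite big_ord0 derivXn.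
by rewrite bern_rec derivXn /= scaler_nat.
Qed.

Variable N : nat.
Definition L (p : {poly R}) := \sum_(i < N) p`_i *: B i.

Lemma L_sum m (F : 'I_m -> {poly R}) : L (\sum_(j < m) F j) = \sum_(j < m) L (F j).
Proof.
rewrite /L exchange_big /=; apply: eq_bigr => i _.
by rewrite coef_sum scaler_suml.
Qed.

Lemma L_C c p : L (c%:P * p) = c *: L p.
Proof.
rewrite /L scaler_sumr; apply: eq_bigr => i _.
by rewrite coefCM scalerA.
Qed.

Lemma L_X i : (i < N)%N -> L 'X^i = B i.
Proof.
move=> hi; rewrite /L (bigD1 (Ordinal hi)) //= coefXn eqxx scale1r big1 ?addr0 //.
move=> j hj; rewrite coefXn; case: eqP => [e|_]; last by rewrite scale0r.
by move: hj; rewrite -(inj_eq val_inj) /= e eqxx.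
Qed.

Lemma L_shift m : (m < N)%N -> L (('X + 1) ^+ m) = B m + ('X^m)^`().
Proof.
move=> mN; rewrite exprD1n L_sum big_ord_recr /= binn mulr1n L_X // addrC.
congr (_ + _); rewrite -bern_shift; apply: eq_bigr => [[i hi]] _ /=.
by rewrite -mulr_natl -polyC_natr L_C L_X //; apply: ltn_trans mN.
Qed.

End B.

Lemma expand (T : comNzRingType) (n k : nat) (Y : T) : (k <= n)%N ->
  Y ^+ (n - k) * (Y - 1) ^+ k = \sum_(j < k.+1) ('C(k, j)%:R * (-1) ^+ j) * Y ^+ (n - j).
Proof.
move=> kn; rewrite exprBn mulr_sumr; apply: eq_bigr => [[j /= hj]] _.
rewrite expr1n mulr1 -mulr_natl.
have -> : (n - j = (n - k) + (k - j))%N by lia.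
rewrite exprD; ring.
Qed.

Theorem mainTheorem4 (R : numFieldType) (n k : nat) (x : R) :
  (k <= n)%N ->
  (\sum_(j < (n - k).+1) ('C(n - k, j))%:R * (bernoulli_poly R (j + k)).[x]) =
  (\sum_(j < k.+1) ('C(k, j))%:R * (-1) ^+ j * (bernoulli_poly R (n - j)).[x])
  + (('X^(n - k) * ('X - 1) ^+ k)^`()).[x].
Proof.
move=> kn.
have e1 : ('X + 1 : {poly R}) ^+ (n - k) * 'X ^+ k =
   \sum_(j < (n - k).+1) ('C(n - k, j)%:R)%:P * 'X^(j + k).
  rewrite exprD1n mulr_suml; apply: eq_bigr => j _.
  by rewrite exprD polyC_natr mulr_natl mulrnAl.
have e2 : ('X + 1 : {poly R}) ^+ (n - k) * 'X ^+ k =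
   \sum_(j < k.+1) ('C(k, j)%:R * (-1) ^+ j)%:P * ('X + 1) ^+ (n - j).
  have h := @expand _ n k ('X + 1 : {poly R}) kn; rewrite addrK in h.
  rewrite h; apply: eq_bigr => j _.
  by rewrite rmorphM /= rmorphXn /= rmorphN /= polyC1 polyC_natr.
have := congr1 (@L R n.+1) e1; rewrite e2 !L_sum.
have e3 : ('X^(n - k) * ('X - 1) ^+ k : {poly R}) =
   \sum_(j < k.+1) ('C(k, j)%:R * (-1) ^+ j)%:P * 'X^(n - j).
  rewrite expand //; apply: eq_bigr => j _.
  by rewrite rmorphM /= rmorphXn /= rmorphN /= polyC1 polyC_natr.
rewrite e3.
under eq_bigr => j _ do rewrite L_C L_shift ?ltnS ?leq_subr //.
move=> h.
have h2 : \sum_(j < (n - k).+1) L R n.+1 (('C(n - k, j)%:R)%:P * 'X^(j + k))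
   = \sum_(j < (n - k).+1) 'C(n - k, j)%:R *: bernoulli_poly R (j + k).
  apply: eq_bigr => [[j hj]] _ /=; rewrite L_C L_X //; lia.
rewrite h2 in h.
have := congr1 (fun p => p.[x]) h; rewrite /= !horner_sum.
under [\sum_(i < (n - k).+1) _]eq_bigr => i _ do rewrite hornerZ.
move=> <-.
rewrite (big_morph _ (@derivD _) (deriv0 _)) horner_sum -big_split /=.
apply: eq_bigr => j _.
by rewrite hornerZ hornerD mulrDr mul_polyC derivZ hornerZ.
Qed.
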